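(* For every state transition function $\tau: S\times A^{N}\to S$ there exists an action theory $\gamma=(\gamma^+,\gamma^-)$ that is equivalent to $\tau$, i.e. for every state $s\in S$ and every joint action $\bar a\in A^N$, the successor state of $s$ under $\bar a$ determined by $\gamma$ equals $\tau(s,\bar a)$ (so $\gamma$ and $\tau$ generate exactly the same histories from any initial state under any sequence of joint actions). Moreover, the size of $\gamma$ is at most polynomial in the size of the explicit table representation of $\tau$ (the table listing, for each of the $|A|^{|N|}\cdot 2^{|P|}$ pairs $(s,\bar a)$, the state $\tau(s,\bar a)$).
   Context: Let $N$ be a finite set of agents, $P$ a finite set of propositional atoms, $S=2^P$ the set of states, and $A$ a finite nonempty set of action names. The language $\mathcal{L}_{PL+}$ is generated by $\phi ::= p \mid do(i,a) \mid \neg\phi \mid \phi\wedge\phi$ with $p\in P$, $i\in N$, $a\in A$. Such a formula is evaluated at a pair $(s,\bar a)$ of a state and a joint action $\bar a\in A^N$: $p$ holds iff $p\in s$, $do(i,a)$ holds iff $\bar a(i)=a$, Boolean connectives as usual. An action theory is a pair $\gamma=(\gamma^+,\gamma^-)$ of functions $N\times A\times P\to\mathcal{L}_{PL+}$. The successor of $s$ under $\bar a$ determined by $\gamma$ is $(s\setminus D)\cup U$, where $D$ is the set of $p\in P$ such that $(s,\bar a)\models\gamma^-(i,\bar a(i),p)$ for some $i\in N$ and $(s,\bar a)\models\neg\gamma^+(j,\bar a(j),p)$ for all $j\in N$, and $U$ is the set of $p\in P$ such that $(s,\bar a)\models\gamma^+(i,\bar a(i),p)$ for some $i\in N$ and $(s,\bar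 a)\models\neg\gamma^-(j,\bar a(j),p)$ for all $j\in N$ (inertia: if actions conflict on $p$, its truth value does not change). A state transition function is any function $\tau:S\times A^N\to S$. *)

(* Defs.v *)
From mathcomp Require Import all_boot.
Set Implicit Arguments. Unset Strict Implicit. Unset Printing Implicit Defensive.

Inductive plform (N P A : Type) : Type :=
| PAtom : P -> plform N P A
| PDo   : N -> A -> plform N P A
| PNeg  : plform N P A -> plform N P A
| PAnd  : plform N P A -> plform N P A -> plform N P A.

Section Sem.
Variables (N P A : finType).

Definition state := {set P}.
Definition jaction := {ffun N -> A}.

Fixpoint holds (s : state) (ja : jaction) (f : plform N P A) : bool :=
  match f with
  | PAtom p => p \in s
  | PDo i a => ja i == a
  | PNeg g => ~~ holds s ja g
  | PAnd g h => holds s ja g && holds s ja h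
  end.

Definition action_theory :=
  ((N -> A -> P -> plform N P A) * (N -> A -> P -> plform N P A))%type.

Definition gplus (g : action_theory) := g.1.
Definition gminus (g : action_theory) := g.2.

Definition del_set (g : action_theory) (s : state) (ja : jaction) : state :=
  [set p | [exists i, holds s ja (gminus g i (ja i) p)]
           && [forall j, ~~ holds s ja (gplus g j (ja j) p)]].

Definition upd_set (g : action_theory) (s : state) (ja : jaction) : state :=
  [set p | [exists i, holds s ja (gplus g i (ja i) p)]
           && [forall j, ~~ holds s ja (gminus g j (ja j) p)]].

Definition successor (g : action_theory) (s : state) (ja : jaction) : state :=
  (s :\: del_set g s ja) :|: upd_set g s ja.

Definition equivalent (g : action_theory) (tau : state -> jaction -> state) :=
  forall s ja, successor g s ja = tau s ja.

End Sem.

Fixpoint fsize (N P A : Type) (f : plform N P A) : nat :=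
  match f with
  | PAtom _ => 1
  | PDo _ _ => 1
  | PNeg g => (fsize g).+1
  | PAnd g h => (fsize g + fsize h).+1
  end.

Definition theory_size (N P A : finType) (g : action_theory N P A) : nat :=
  \sum_(i : N) \sum_(a : A) \sum_(p : P)
     (fsize (gplus g i a p) + fsize (gminus g i a p)).

(* size of the explicit table of tau: |A|^|N| * 2^|P| rows, each listing a
   state (|P| bits), a joint action (|N| entries) and the successor state
   (|P| bits). *)
Definition table_size (N P A : finType) : nat :=
  #|A| ^ #|N| * 2 ^ #|P| * (#|N| + 2 * #|P| + 1).

(* Main.v *)
Require Import Defs.
From mathcomp Require Import all_boot zify.
Set Implicit Arguments. Unset Strict Implicit. Unset Printing Implicit Defensive.

Section Constr.
Variables (N P A : finType) (i0 : N) (a0 : A).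
Variable tau : state P -> jaction N A -> state P.

Definition FF : plform N P A := PAnd (PDo P i0 a0) (PNeg (PDo P i0 a0)).
Definition TT : plform N P A := PNeg FF.
Definition Or (f g : plform N P A) := PNeg (PAnd (PNeg f) (PNeg g)).
Definition bigAnd (l : seq (plform N P A)) := foldr (@PAnd N P A) TT l.
Definition bigOr (l : seq (plform N P A)) := foldr Or FF l.

Lemma holds_bigAnd s ja l : holds s ja (bigAnd l) = all (holds s ja) l.
Proof. elim: l => [|f l IH] /=; first by rewrite andbN. by rewrite IH. Qed.

Lemma holds_bigOr s ja l : holds s ja (bigOr l) = has (holds s ja) l.
Proof. elim: l => [|f l IH] /=; first by rewrite andbN. by rewrite IH negb_and !negbK. Qed.

Lemma size_bigAnd l m : all (fun f => fsize f <= m) l -> fsize (bigAnd l) <= size l * m.+1 + 5.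
Proof.
elim: l => [|f l IH] //= /andP [Hf Hl].
have := IH Hl. rewrite mulSn. lia.
Qed.

Lemma size_bigOr l m : all (fun f => fsize f <= m) l -> fsize (bigOr l) <= size l * (m + 4) + 4.
Proof.
elim: l => [|f l IH] //= /andP [Hf Hl].
have := IH Hl. rewrite mulSn. lia.
Qed.

Definition lit (s : state P) (p : P) : plform N P A :=
  if p \in s then PAtom N A p else PNeg (PAtom N A p).

Definition chr (x : state P * jaction N A) : plform N P A :=
  bigAnd ([seq lit x.1 p | p <- enum P] ++ [seq PDo P i (x.2 i) | i <- enum N]).

Lemma holds_chr s ja x : holds s ja (chr x) = (s == x.1) && (ja == x.2).
Proof.
rewrite /chr holds_bigAnd all_cat !all_map.
congr andb.
- apply/allP/eqP => [H|->].
  + apply/setP => p. have /H : p \in Finite.enum P by rewrite -enumT mem_enum.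
    rewrite /= /lit.
    by case: (p \in x.1) => /=; case: (p \in s).
  + by move=> p _ /=; rewrite /lit; case E: (p \in x.1) => /=; rewrite E.
- apply/allP/eqP => [H|->].
  + apply/ffunP => i. have /H : i \in Finite.enum N by rewrite -enumT mem_enum.
    by move=> /= /eqP.
  + by move=> i _ /=.
Qed.

Lemma size_chr x : fsize (chr x) <= 3 * (#|P| + #|N|) + 5.
Proof.
rewrite /chr; apply: leq_trans (size_bigAnd (m := 2) _) _.
  by rewrite all_cat !all_map; apply/andP; split; apply/allP => y _ //=; rewrite /lit; case: ifP.
by rewrite size_cat !size_map -!enumT -!cardE mulnC.
Qed.

Definition rows := enum {: state P * jaction N A}.

Definition phi (b : bool) (p : P) : plform N P A :=
  bigOr [seq chr x | x <- rows & (p \in tau x.1 x.2) == b].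

Lemma holds_phi b p s ja : holds s ja (phi b p) = ((p \in tau s ja) == b).
Proof.
rewrite /phi holds_bigOr has_map.
apply/hasP/idP => [[x]|H].
  by rewrite mem_filter /= holds_chr => /andP [Hb _] /andP [/eqP -> /eqP ->].
exists (s, ja); last by rewrite /= holds_chr !eqxx.
by rewrite mem_filter H /rows mem_enum.
Qed.

Lemma size_phi b p : fsize (phi b p) <=
   #|{: state P * jaction N A}| * (3 * (#|P| + #|N|) + 9) + 4.
Proof.
rewrite /phi; apply: leq_trans (size_bigOr (m := 3 * (#|P| + #|N|) + 5) _) _.
  by rewrite all_map; apply/allP => x _ /=; apply: size_chr.
rewrite size_map size_filter -addnA /= leq_add2r leq_mul2r; apply/orP; right.
by rewrite cardE; apply: count_size.
Qed.

Definition gam : action_theory N P A := (fun _ _ p => phi true p, fun _ _ p => phi false p).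

Lemma gam_equiv : equivalent gam tau.
Proof.
move=> s ja; apply/setP => p.
rewrite /successor /del_set /upd_set !inE /gplus /gminus /= !holds_phi.
case: (p \in tau s ja) => /=.
  rewrite orbC; apply/orP; left; apply/andP; split.
    by apply/existsP; exists i0.
  by apply/forallP.
rewrite (_ : [exists i, false == false] = true); last by apply/existsP; exists i0.
rewrite (_ : [forall j : N, true] = true); last by apply/forallP.
by [].
Qed.

End Constr.

Lemma arith (M K R W t : nat) : t <= M * (2 * (R * K + 4)) -> M <= W * R -> 1 <= R -> 1 <= W -> K <= 9 * W -> t <= 26 * (R * W) ^ 2.
Proof.
move=> H1 H2 H3 H4 H5. apply: (leq_trans H1).
have H6 : 2 * (R * K + 4) <= 26 * (R * W).
  have : R * K <= R * (9 * W) by rewrite leq_mul2l H5 orbT.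
  have : 1 <= R * W by rewrite muln_gt0 H3 H4. lia.
apply: leq_trans (leq_mul H2 H6) _. rewrite expnS expn1. lia.
Qed.

Theorem proposition1 :
  exists c k : nat,
    forall (N P A : finType), 0 < #|N| -> 0 < #|A| ->
    forall tau : state P -> jaction N A -> state P,
    exists g : action_theory N P A,
      equivalent g tau /\ theory_size g <= c * (table_size N P A) ^ k.
Proof.
exists 26, 2 => N P A HN HA tau.
have [i0 _] := card_gt0P HN. have [a0 _] := card_gt0P HA.
exists (gam i0 a0 tau); split; first exact: gam_equiv.
set R := #|{: state P * jaction N A}|.
set K := 3 * (#|P| + #|N|) + 9.
have HR : R = #|A| ^ #|N| * 2 ^ #|P|.
  rewrite /R card_prod card_ffun mulnC; congr (_ * _).
  by rewrite -cardsT -powersetT card_powerset cardsT.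
rewrite /table_size -HR.
apply: (@arith (#|N| * #|A| * #|P|) K).
- rewrite /theory_size.
  have Hb : forall (i : N) (a : A) (p : P), fsize (gplus (gam i0 a0 tau) i a p) + fsize (gminus (gam i0 a0 tau) i a p) <= 2 * (R * K + 4).
    move=> i a p; rewrite /gplus /gminus /=.
    have := size_phi i0 a0 tau true p; have := size_phi i0 a0 tau false p. rewrite -/R -/K. lia.
  apply: leq_trans; first (apply: leq_sum => i _; apply: leq_sum => a _; apply: leq_sum => p _; exact: (Hb i a p)).
  rewrite !sum_nat_const !cardT -!cardE -!mulnA. lia.
- rewrite HR.
  have h1 : #|A| <= #|A| ^ #|N| by rewrite -{1}(expn1 #|A|) leq_pexp2l.
  have h2 : #|P| <= 2 ^ #|P| by apply: ltnW; apply: ltn_expl.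
  have := leq_mul (leq_mul h1 h2) (leq_addr (2 * #|P| + 1) #|N|).
  lia.
- rewrite HR muln_gt0 !expn_gt0 HA. done.
- lia.
- rewrite /K. lia.
Qed.
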